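(* $$\sigma(3,1)+\sigma(2,2)=3\lambda(4)=\frac{\pi^4}{32}.$$
   Context: For integers $t\geq 1$, $n\geq 1$ let $S_n^{(t)}=\sum_{k=1}^{n}\frac{1}{(2k-1)^t}$, and for integers $s\geq 2$, $t\geq 1$ let $\sigma(s,t)=\sum_{n\geq 1}\frac{S_n^{(t)}}{n^s}$. For real $s>1$, $\lambda(s)=\sum_{n\geq 1}\frac{1}{(2n-1)^s}$. *)

(* Defs.v *)
From Stdlib Require Import Reals.
From Coquelicot Require Import Coquelicot.
Open Scope R_scope.

Fixpoint oddH (n t : nat) : R :=
  match n with
  | O => 0
  | S m => oddH m t + / (2 * INR m + 1) ^ t
  end.

(* term of sigma(s,t), reindexed from n >= 1 to n >= 0 *)
Definition sigma_term (s t : nat) (n : nat) : R :=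
  oddH (S n) t / (INR (S n)) ^ s.

Definition sigma_st (s t : nat) : R := Series (sigma_term s t).

(* term of lambda(s): 1/(2n-1)^s for n >= 1, reindexed to n >= 0 *)
Definition lambda_term (s : R) (n : nat) : R := / Rpower (2 * INR n + 1) s.

Definition lambda_odd (s : R) : R := Series (lambda_term s).

(* Main.v *)
Require Import Defs.
From Stdlib Require Import Reals Lra Lia Field.
From Coquelicot Require Import Coquelicot.
Ltac sring := ring. Ltac sfield := field. Ltac slra := lra. Ltac snra := nra.
From HB Require Import structures.
From mathcomp Require Import all_boot all_order all_algebra.
From mathcomp Require Import ring lra.
From mathcomp Require Import Rstruct zify.
Set Implicit Arguments. Unset Strict Implicit. Unset Printing Implicit Defensive.
Import Order.TTheory GRing.Theory Num.Theory.
Open Scope R_scope.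

Section P.
Local Open Scope ring_scope.
Fixpoint RT (j : nat) : {poly R} * {poly R} :=
  if j is j'.+1 then let: (r, t) := RT j' in
    ((1 - 'X) * r - 2%:R *: ('X * t), 2%:R *: r + (1 - 'X) * t)
  else (1, 0).

Lemma RT_S j : RT j.+1 = ((1 - 'X) * (RT j).1 - 2%:R *: ('X * (RT j).2),
   2%:R *: (RT j).1 + (1 - 'X) * (RT j).2).
Proof. by rewrite /=; case: (RT j). Qed.

Lemma coef_1X (p : {poly R}) i : ((1 - 'X) * p)`_i = p`_i - (if i is i'.+1 then p`_i' else 0).
Proof. rewrite mulrBl mul1r coefB coefXM; by case: i. Qed.

Lemma coef_RT j i : 
  (RT j.+1).1`_i = (RT j).1`_i - (if i is i'.+1 then (RT j).1`_i' + 2%:R * (RT j).2`_i' else 0)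
  /\ (RT j.+1).2`_i = 2%:R * (RT j).1`_i + (RT j).2`_i - (if i is i'.+1 then (RT j).2`_i' else 0).
Proof.
rewrite RT_S /= coefB coefD coef_1X coef_1X !coefZ coefXM.
case: i => [|i] /=; split; ring.
Qed.
Lemma RT_low j : let x := (j%:R : R) in
  [/\ (RT j).1`_0 = 1, (RT j).2`_0 = 2%:R * x,
      (RT j).1`_1 = - (x * (2%:R * x - 1)),
      3%:R * (RT j).2`_1 = - (x * (2%:R * x - 1) * (2%:R * x - 2%:R)) &
      12%:R * (RT j).1`_2 = x * (2%:R * x - 1) * (2%:R * x - 2%:R) * (2%:R * x - 3%:R)].
Proof.
elim: j => [|j [h0 h1 h2 h3 h4]] /=.
  by rewrite !coefC /=; split; ring.
have [a0 b0] := coef_RT j 0; have [a1 b1] := coef_RT j 1; have [a2 b2] := coef_RT j 2.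
have n3 : (3%:R : R) != 0 by rewrite pnatr_eq0.
have n12 : (12%:R : R) != 0 by rewrite pnatr_eq0.
have ht1 : (RT j).2`_1 = - (j%:R * (2%:R * j%:R - 1) * (2%:R * j%:R - 2%:R)) / 3%:R.
  by rewrite -h3 mulrC mulrA mulVf ?mul1r.
have hr2 : (RT j).1`_2 = j%:R * (2%:R * j%:R - 1) * (2%:R * j%:R - 2%:R) * (2%:R * j%:R - 3%:R) / 12%:R.
  by rewrite -h4 mulrC mulrA mulVf ?mul1r.
rewrite a0 b0 a1 b1 a2 /= h0 h1 h2 ht1 hr2 !mulrSr.
split; field => //.
Qed.

Lemma RT_high j : (forall i, (j < i)%N -> (RT j).1`_i = 0) /\ (forall i, (j <= i)%N -> (RT j).2`_i = 0)
  /\ (RT j).1`_j = (-1) ^+ j.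
Proof.
elim: j => [|j [H1 [H2 H3]]].
  split; [|split]; [move=> [|i] //= _| move=> i _|]; rewrite /= ?coef1 ?coefC ?coef0 ?if_same //.
split; [|split].
- move=> [|i] // Hi; have [-> _] := coef_RT j i.+1.
  rewrite !H1 ?H2; (ring || lia).
- move=> [|i] // Hi; have [_ ->] := coef_RT j i.+1.
  rewrite !H1 ?H2; (ring || lia).
- have [-> _] := coef_RT j j.+1.
  rewrite H1 ?H2 // H3 exprS; ring.
Qed.
Lemma size_RT m : size (RT m).1 = m.+1.
Proof.
have [H1 [_ H3]] := RT_high m.
apply/eqP; rewrite eqn_leq; apply/andP; split.
  by apply/leq_sizeP => i Hi; apply: H1.
rewrite ltnNge; apply/negP => /leq_sizeP /(_ m (leqnn m)).
by rewrite H3 => /eqP; rewrite signr_eq0.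
Qed.

Lemma prod1 (l : seq R) :
  [/\ (\prod_(a <- l) (1 - a *: 'X))`_0 = 1, (\prod_(a <- l) (1 - a *: 'X))`_1 = - \sum_(a <- l) a &
   2%:R * (\prod_(a <- l) (1 - a *: 'X))`_2 = (\sum_(a <- l) a) ^+ 2 - \sum_(a <- l) a ^+ 2].
Proof.
elim: l => [|a l IH] /=.
  by rewrite !big_nil !coef1 /=; split; ring.
rewrite !big_cons.
have cf : forall (q : {poly R}) i, ((1 - a *: 'X) * q)`_i = q`_i - (if i is i'.+1 then a * q`_i' else 0).
  by move=> q [|i]; rewrite mulrBl mul1r -scalerAl coefB coefZ coefXM //= mulr0.
rewrite !cf /=.
move: IH; set P := (\prod_(_ <- l) _); set S := (\sum_(_ <- l) _); set S2 := (\sum_(_ <- l) _ ^+ 2).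
case=> h0 h1 h2; rewrite h0 h1; split; [ring|ring|].
rewrite mulrBr h2; ring.
Qed.

Lemma vieta (p : {poly R}) (rs : seq R) : size p = (size rs).+1 -> all (root p) rs -> uniq rs ->
  p`_0 = 1 ->
  \sum_(r <- rs) r^-1 = - p`_1 /\ \sum_(r <- rs) r^-2 = p`_1 ^+ 2 - 2%:R * p`_2.
Proof.
move=> Hs Hr Hu H0.
have Hu' : uniq_roots rs by rewrite uniq_rootsE.
have Hp := all_roots_prod_XsubC Hs Hr Hu'.
have nz : forall r, r \in rs -> r != 0.
  move=> r /(allP Hr); apply: contraTneq => ->.
  by rewrite rootE horner_coef0 H0 oner_eq0.
have E : \prod_(z <- rs) ('X - z%:P) =
    (\prod_(z <- rs) (- z))%:P * \prod_(z <- rs) (1 - z^-1 *: 'X).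
  rewrite rmorph_prod /= -big_split /= big_seq [RHS]big_seq; apply: eq_bigr => z /nz z0.
  rewrite mulrBr mulr1 -mul_polyC mulrA -polyCM mulNr divff // !polyCN polyC1; ring.
rewrite E mul_polyC scalerA in Hp.
set c := _ * _ in Hp.
have [q0 q1 q2] := prod1 [seq z^-1 | z <- rs].
rewrite !big_map in q0 q1 q2.
have hc : c = 1 by move: H0; rewrite Hp coefZ q0 mulr1.
rewrite Hp hc scale1r q1 opprK; split => //.
have -> : \sum_(r <- rs) r ^- 2 = \sum_(r <- rs) r^-1 ^+ 2 by apply: eq_bigr => r _; rewrite exprVn.
rewrite q2; ring.
Qed.
Lemma RT_eval j th : cos th != 0 ->
  cos (th *+ (2 * j)) = cos th ^+ (2 * j) * (RT j).1.[tan th ^+ 2] /\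
  sin (th *+ (2 * j)) = cos th ^+ (2 * j) * tan th * (RT j).2.[tan th ^+ 2].
Proof.
move=> c0.
elim: j => [|j [IH1 IH2]].
  by rewrite /= mulr0n !hornerE cos_0 sin_0.
have e : th *+ (2 * j.+1) = th *+ (2 * j) + (th + th).
  by rewrite mulnS !mulrnDr mulr2n addrC.
rewrite RT_S /= e !cosD !sinD !cosD IH1 IH2.
have -> : tan th = sin th * (cos th)^-1 by [].
rewrite !(hornerD, hornerN, hornerM, hornerZ, hornerX, hornerC, hornerMX).
set r := (RT j).1.[_]; set t := (RT j).2.[_].
rewrite (_ : (2 * j.+1)%N = (2 * j).+2) ?exprS; last by lia.
split; field => //.
Qed.
End P.

Open Scope R_scope.
Lemma tan_gt_x x : 0 < x -> x < PI / 2 -> x < tan x.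
Proof.
move=> h0 h1.
have hc : 0 < cos x by apply: cos_gt_0; slra.
have hP := PI_4.
have [hs _] := SIN x ltac:(slra) ltac:(slra).
have [_ hcu] := COS x ltac:(slra) ltac:(slra).
unfold sin_lb, sin_approx, cos_ub, cos_approx, sin_term, cos_term in *.
cbn [sum_f_R0 Nat.mul Nat.add pow] in hs. cbn [sum_f_R0 Nat.mul Nat.add pow] in hcu.
have fS : forall n, INR (Factorial.fact (S n)) = INR (S n) * INR (Factorial.fact n) by move=> n; rewrite Rfunctions.fact_simpl mult_INR.
have f1 : INR (Factorial.fact 1) = 1 by [].
have f0 : INR (Factorial.fact 0) = 1 by [].
have f3 : INR (Factorial.fact 3) = 6 by rewrite !fS f0 /=; sring.
have f5 : INR (Factorial.fact 5) = 120 by rewrite !fS f0 /=; sring.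
have f7 : INR (Factorial.fact 7) = 5040 by rewrite !fS f0 /=; sring.
have f2 : INR (Factorial.fact 2) = 2 by rewrite !fS f0 /=; sring.
have f4 : INR (Factorial.fact 4) = 24 by rewrite !fS f0 /=; sring.
have f6 : INR (Factorial.fact 6) = 720 by rewrite !fS f0 /=; sring.
have f8 : INR (Factorial.fact 8) = 40320 by rewrite !fS f0 /=; sring.
rewrite f1 f3 f5 f7 in hs; rewrite f0 f2 f4 f6 f8 in hcu.
have key : x * cos x < sin x.
  have hx2 : x < 2 by slra.
  have y0 : 0 < x * x by snra.
  have : x * (1 - x^2/2 + x^4/24 - x^6/720 + x^8/40320) < x - x^3/6 + x^5/120 - x^7/5040.
    have : 0 < x^3 * (1/3 - x^2/30 + x^4/840 - x^6/40320).
      apply: Rmult_lt_0_compat; first by apply: pow_lt.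
      have : x^2 < 4 by snra.
      have : 0 < x^2 by snra.
      have : x^6 = x^2*x^2*x^2 by sring.
      have : x^4 = x^2*x^2 by sring.
      move=> -> -> ? ?. snra.
    move=> H. snra.
  move=> H; snra.
rewrite /tan. apply: (Rmult_lt_reg_r (cos x)) => //. field_simplify; slra.
Qed.

Lemma ineq_k y : 0 < y -> y < PI / 2 ->
  / (tan y ^ 2) <= / y ^ 2 <= 1 + / (tan y ^ 2).
Proof.
move=> h0 h1.
have ht := tan_gt_x h0 h1.
have hs : sin y < y by apply: sin_lt_x.
have hP := PI_RGT_0.
have hs0 : 0 < sin y by apply: sin_gt_0; slra.
have hc : 0 < cos y by apply: cos_gt_0; slra.
split.
  apply: Rlt_le; apply: Rinv_lt_contravar; first by apply: Rmult_lt_0_compat; apply: pow_lt; slra.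
  simpl; snra.
have -> : 1 + / tan y ^ 2 = / sin y ^ 2.
  have H := sin2_cos2 y. rewrite /Rsqr in H. rewrite /tan.
  have -> : 1 + / (sin y / cos y) ^ 2 = (sin y * sin y + cos y * cos y) / sin y ^ 2.
    sfield; split; slra.
  rewrite H; sfield; slra.
apply: Rlt_le; apply: Rinv_lt_contravar; first by apply: Rmult_lt_0_compat; apply: pow_lt; slra.
simpl; snra.
Qed.

Definition thk (m k : nat) : R := (2 * INR k + 1) * PI / (4 * INR m).

Lemma thk_eq m k : (0 < m)%nat -> thk m k * (4 * INR m) = (2 * INR k + 1) * PI.
Proof. move=> hm; have := lt_0_INR m ltac:(lia); move=> h; rewrite /thk; sfield; slra. Qed.

Lemma thk_range m k : (k < m)%nat -> 0 < thk m k /\ thk m k < PI / 2.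
Proof.
move=> hk.
have hm : (0 < m)%nat by lia.
have e := thk_eq k hm.
have h0 := lt_0_INR m ltac:(lia).
have hk' : INR k + 1 <= INR m by rewrite -S_INR; apply: le_INR; lia.
have hk0 := pos_INR k.
have hP := PI_RGT_0.
split; snra.
Qed.

Lemma thk_lt m k1 k2 : (k1 < k2)%nat -> (0 < m)%nat -> thk m k1 < thk m k2.
Proof.
move=> hk hm.
have e1 := thk_eq k1 hm. have e2 := thk_eq k2 hm.
have h0 := lt_0_INR m ltac:(lia).
have hk' : INR k1 < INR k2 by apply: lt_INR; lia.
have hP := PI_RGT_0.
snra.
Qed.

Lemma thk_mul m k : (0 < m)%nat -> thk m k * INR (2 * m) = INR k * PI + PI / 2.
Proof. move=> hm; have := lt_0_INR m ltac:(lia); move=> h; rewrite /thk mult_INR; simpl INR; sfield; slra. Qed.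

Lemma tan_lt2 m k1 k2 : (k1 < k2)%nat -> (k2 < m)%nat ->
  tan (thk m k1) ^ 2 < tan (thk m k2) ^ 2.
Proof.
move=> h12 h2.
have [a0 a1] := thk_range (ltac:(lia) : (k1 < m)%nat).
have [b0 b1] := thk_range h2.
have hl := thk_lt (m:=m) h12 (ltac:(lia)).
have t0 := tan_gt_0 _ a0 a1.
have t := tan_increasing _ _ (ltac:(slra) : - PI / 2 < thk m k1) hl b1.
simpl; snra.
Qed.

Lemma cos_thk_pos m k : (k < m)%nat -> 0 < cos (thk m k).
Proof. move=> hk; have [a0 a1] := thk_range hk; apply: cos_gt_0; slra. Qed.

Lemma cos_thk_2m m k : (0 < m)%nat -> cos (thk m k * INR (2 * m)) = 0.
Proof.
move=> hm; rewrite thk_mul //; apply: cos_eq_0_1; exists (Z.of_nat k).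
by rewrite -INR_IZR_INZ.
Qed.

Definition bsum (m : nat) (f : nat -> R) : R := (\sum_(k < m) f k)%R.

Section Main.
Local Open Scope ring_scope.

Lemma root_k m k : (k < m)%N -> (RT m).1.[tan (thk m k) ^+ 2] = 0.
Proof.
move=> hk.
have hm : (0 < m)%N by lia.
have cnz : cos (thk m k) != 0.
  apply/eqP => h; have := cos_thk_pos hk; rewrite h; exact: Rlt_irrefl.
have [c0 _] := RT_eval m cnz.
have e : cos (thk m k *+ (2 * m)) = 0.
  rewrite -mulr_natr -INRE; exact: cos_thk_2m.
move: c0; rewrite e => /esym/eqP; rewrite mulf_eq0 expf_eq0 (negbTE cnz) andbF /=.
by move/eqP.
Qed.

Lemma sums m : (0 < m)%N ->
  bsum m (fun k => (tan (thk m k) ^+ 2)^-1) = m%:R * (2%:R * m%:R - 1) /\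
  bsum m (fun k => (tan (thk m k) ^+ 2)^-2) = (m%:R * (2%:R * m%:R - 1)) ^+ 2
     - 2%:R * (m%:R * (2%:R * m%:R - 1) * (2%:R * m%:R - 2%:R) * (2%:R * m%:R - 3%:R) / 12%:R).
Proof.
move=> hm.
set f := fun k => tan (thk m k) ^+ 2.
have hs : size (RT m).1 = (size [seq f k | k <- iota 0 m]).+1 by rewrite size_map size_iota size_RT.
have hr : all (root (RT m).1) [seq f k | k <- iota 0 m].
  by apply/allP => r /mapP [k]; rewrite mem_iota add0n => /andP [_ hk] ->; apply/eqP; exact: root_k.
have hu : uniq [seq f k | k <- iota 0 m].
  rewrite map_inj_in_uniq ?iota_uniq // => k1 k2; rewrite !mem_iota !add0n => /andP[_ h1] /andP[_ h2] e.
  case: (ltngtP k1 k2) => // h12; exfalso.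
  - have := tan_lt2 h12 h2; rewrite /f -!RpowE in e; rewrite e; exact: Rlt_irrefl.
  - have := tan_lt2 h12 h1; rewrite /f -!RpowE in e; rewrite e; exact: Rlt_irrefl.
have [h0 _ h1 _ h2] := RT_low m.
have [v1 v2] := vieta hs hr hu h0.
rewrite /bsum.
have ei : iota 0 m = index_iota 0 m by rewrite /index_iota subn0.
rewrite big_map ei big_mkord in v1.
rewrite big_map ei big_mkord in v2.
have n12 : (12%:R : R) != 0 by rewrite pnatr_eq0.
have hr2 : (RT m).1`_2 = m%:R * (2%:R * m%:R - 1) * (2%:R * m%:R - 2%:R) * (2%:R * m%:R - 3%:R) / 12%:R.
  by rewrite -h2 mulrC mulrA mulVf ?mul1r.
rewrite v1 v2 h1 hr2; split; ring.
Qed.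
End Main.

Section Bounds.
Local Open Scope ring_scope.
Lemma thk_alt m k : thk m k = (2%:R * k%:R + 1) * PI / (4%:R * m%:R).
Proof. by rewrite /thk !RealsE. Qed.

Lemma PI_gt0 : 0 < PI.
Proof. exact/RltP/PI_RGT_0. Qed.

Lemma perk m k : (k < m)%N ->
  0 <= (tan (thk m k) ^+ 2)^-1 /\ (tan (thk m k) ^+ 2)^-1 <= (thk m k ^+ 2)^-1 /\
  (thk m k ^+ 2)^-1 <= 1 + (tan (thk m k) ^+ 2)^-1.
Proof.
move=> hk.
have [a0 a1] := thk_range hk.
have [b1 b2] := ineq_k a0 a1.
rewrite !RpowE in b1 b2.
split; first by rewrite invr_ge0 sqr_ge0.
by split; apply/RleP.
Qed.

Lemma w_eq m k : (0 < m)%N -> (thk m k ^+ 2)^-1 =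
   (16%:R * m%:R ^+ 2 / PI ^+ 2) * ((2%:R * k%:R + 1) ^+ 2)^-1.
Proof.
move=> hm; rewrite thk_alt.
have hP : PI != 0 by rewrite gt_eqF // PI_gt0.
have hm' : m%:R != 0 :> R by rewrite pnatr_eq0 -lt0n.
have hk : 2%:R * k%:R + 1 != 0 :> R.
  have k0 : 0 <= k%:R :> R by apply: ler0n.
  rewrite gt_eqF //; lra.
by field; rewrite hk hP hm'.
Qed.

Lemma bounds m : (0 < m)%N ->
  (PI ^+ 2 / 8%:R - PI ^+ 2 / (16%:R * m%:R) <= bsum m (fun k => ((2%:R * k%:R + 1) ^+ 2)^-1)
   /\ bsum m (fun k => ((2%:R * k%:R + 1) ^+ 2)^-1) <= PI ^+ 2 / 8%:R) /\
  (PI ^+ 4 / 96%:R - PI ^+ 4 / (96%:R * m%:R) <= bsum m (fun k => ((2%:R * k%:R + 1) ^+ 2 ^+ 2)^-1)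
   /\ bsum m (fun k => ((2%:R * k%:R + 1) ^+ 2 ^+ 2)^-1) <= PI ^+ 4 / 96%:R + PI ^+ 4 / (96%:R * m%:R)).
Proof.
move=> hm.
have [s1 s2] := sums hm.
rewrite /bsum in s1 s2 *.
set x : R := m%:R in s1 s2 *.
have x1 : 1 <= x by rewrite /x ler1n.
have hP := PI_gt0.
have hP0 : PI != 0 by rewrite gt_eqF.
have hx0 : x != 0 by rewrite gt_eqF // (lt_le_trans ltr01 x1).
set c := fun k => (tan (thk m k) ^+ 2)^-1.
set w := fun k => (thk m k ^+ 2)^-1.
have e2 : \sum_(k < m) (tan (thk m k) ^+ 2)^-2 = \sum_(k < m) c k ^+ 2.
  by apply: eq_bigr => k _; rewrite /c exprVn.
rewrite e2 in s2.
have L1 : \sum_(k < m) c k <= \sum_(k < m) w k.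
  by apply: ler_sum => k _; have [_ [h _]] := perk (ltn_ord k).
have U1 : \sum_(k < m) w k <= \sum_(k < m) (1 + c k).
  by apply: ler_sum => k _; have [_ [_ h]] := perk (ltn_ord k).
have L2 : \sum_(k < m) c k ^+ 2 <= \sum_(k < m) w k ^+ 2.
  apply: ler_sum => k _; have [h0 [h1 h2]] := perk (ltn_ord k); rewrite -/(c k) -/(w k) in h0 h1 h2.
  nra.
have U2 : \sum_(k < m) w k ^+ 2 <= \sum_(k < m) (1 + 2%:R * c k + c k ^+ 2).
  apply: ler_sum => k _; have [h0 [h1 h2]] := perk (ltn_ord k); rewrite -/(c k) -/(w k) in h0 h1 h2.
  nra.
rewrite big_split /= sumr_const card_ord -/x in U1.
rewrite !big_split /= sumr_const card_ord -/x -mulr_sumr in U2.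
rewrite s1 in L1 U1 U2. rewrite s2 in L2 U2.
set q := (16%:R * x ^+ 2 / PI ^+ 2).
have hx : 0 < x := lt_le_trans ltr01 x1.
have hq : 0 < q by apply: divr_gt0; [apply: mulr_gt0; [rewrite ltr0n | apply: exprn_gt0] | apply: exprn_gt0].
have W1 : \sum_(k < m) w k = q * \sum_(k < m) ((2%:R * k%:R + 1) ^+ 2)^-1.
  rewrite mulr_sumr; apply: eq_bigr => k _; exact: w_eq.
have W2 : \sum_(k < m) w k ^+ 2 = q ^+ 2 * \sum_(k < m) ((2%:R * k%:R + 1) ^+ 2 ^+ 2)^-1.
  rewrite mulr_sumr; apply: eq_bigr => k _; by rewrite /w w_eq // -/x -/q exprMn exprVn.
rewrite W1 in L1 U1. rewrite W2 in L2 U2.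
set S2 := \sum_(k < m) _ in L1 U1 *.
set S4 := \sum_(k < m) _ in L2 U2 *.
have hq2 : 0 < q ^+ 2 by rewrite exprn_gt0.
have eS2 : S2 = q^-1 * (q * S2) by field; rewrite gt_eqF.
have eS4 : S4 = (q ^+ 2)^-1 * (q ^+ 2 * S4) by field; rewrite gt_eqF.
have iq : 0 < q^-1 by rewrite invr_gt0.
have iq2 : 0 < (q ^+ 2)^-1 by rewrite invr_gt0.
have eqle : forall a b : R, a = b -> a <= b by move=> a b ->.
have hm0 : m%:R != 0 :> R := hx0.
have hB : (x * (2%:R * x - 1)) ^+ 2 - 2%:R * (x * (2%:R * x - 1) * (2%:R * x - 2%:R) * (2%:R * x - 3%:R) / 12%:R)
     = (8%:R * x ^+ 4 - 8%:R * x ^+ 2 + 3%:R * x) / 3%:R by field.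
rewrite hB in L2 U2.
split; split.
- rewrite -(ler_pM2l hq); apply: le_trans L1; apply: eqle; rewrite /q; field.
  by repeat (apply/andP; split); first [exact: hx0 | exact: hP0].
- rewrite -(ler_pM2l hq); apply: (le_trans U1); apply: eqle; rewrite /q; field.
  by repeat (apply/andP; split); first [exact: hx0 | exact: hP0].
- rewrite -(ler_pM2l hq2); apply: le_trans _ L2.
  apply: (@le_trans _ _ ((8%:R * x ^+ 4 - 8%:R * x ^+ 3) / 3%:R)).
    apply: eqle; rewrite /q; field; by repeat (apply/andP; split); first [exact: hx0 | exact: hP0].
  rewrite ler_pM2r ?invr_gt0 ?ltr0n //.
  nra.
- rewrite -(ler_pM2l hq2); apply: (le_trans U2).
  apply: (@le_trans _ _ ((8%:R * x ^+ 4 + 8%:R * x ^+ 3) / 3%:R)).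
    nra.
  apply: eqle; rewrite /q; field; by repeat (apply/andP; split); first [exact: hx0 | exact: hP0].
Qed.
End Bounds.

Open Scope R_scope.

Definition a2 (n : nat) : R := / (2 * INR n + 1) ^ 2.
Definition a4 (n : nat) : R := / (2 * INR n + 1) ^ 4.

Lemma sum_a2 n : sum_n a2 n = bsum n.+1 (fun k => ((2%:R * k%:R + 1) ^+ 2)^-1)%R.
Proof.
rewrite sum_n_Reals sum_f_R0E /bsum big_mkord; apply: eq_bigr => k _.
by rewrite /a2 !RealsE.
Qed.

Lemma sum_a4 n : sum_n a4 n = bsum n.+1 (fun k => ((2%:R * k%:R + 1) ^+ 2 ^+ 2)^-1)%R.
Proof.
rewrite sum_n_Reals sum_f_R0E /bsum big_mkord; apply: eq_bigr => k _.
by rewrite /a4 !RealsE -exprM.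
Qed.

Lemma lim_aux (l c : R) : is_lim_seq (fun n => l - c / INR (S n)) l.
Proof.
have H : is_lim_seq (fun n => / INR n) 0.
  have := is_lim_seq_inv _ _ is_lim_seq_INR ltac:(discriminate).
  by [].
apply is_lim_seq_incr_1 in H.
have H2 := is_lim_seq_minus' _ _ _ _ (is_lim_seq_const l) (is_lim_seq_mult' _ _ _ _ (is_lim_seq_const c) H).
rewrite Rmult_0_r Rminus_0_r in H2.
eapply is_lim_seq_ext; last exact H2.
move=> n /=. rewrite /Rdiv; sring.
Qed.

Lemma lim_aux2 (l c : R) : is_lim_seq (fun n => l + c / INR (S n)) l.
Proof.
eapply is_lim_seq_ext; last exact (@lim_aux l (- c)).
move=> n /=. rewrite /Rdiv; sring.
Qed.

Lemma is_series_a2 : is_series a2 (PI ^ 2 / 8).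
Proof.
have H : is_lim_seq (sum_n a2) (PI ^ 2 / 8).
  apply: (is_lim_seq_le_le (fun n => PI ^ 2 / 8 - (PI ^ 2 / 16) / INR (S n)) _ (fun n => PI ^ 2 / 8)).
  - move=> n. have [[h1 h2] _] := bounds (ltn0Sn n).
    rewrite sum_a2. split; apply/RleP; rewrite !RealsE /=.
    + by move: h1; rewrite invfM mulrA.
    + exact: h2.
  - exact: lim_aux.
  - exact: is_lim_seq_const.
exact: H.
Qed.

Lemma is_series_a4 : is_series a4 (PI ^ 4 / 96).
Proof.
have H : is_lim_seq (sum_n a4) (PI ^ 4 / 96).
  apply: (is_lim_seq_le_le (fun n => PI ^ 4 / 96 - (PI ^ 4 / 96) / INR (S n)) _
     (fun n => PI ^ 4 / 96 + (PI ^ 4 / 96) / INR (S n))).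
  - move=> n. have [_ [h1 h2]] := bounds (ltn0Sn n).
    rewrite sum_a4. split; apply/RleP; rewrite !RealsE /=.
    + by move: h1; rewrite invfM mulrA.
    + by move: h2; rewrite invfM mulrA.
  - exact: lim_aux.
  - exact: lim_aux2.
exact: H.
Qed.

Definition a1 (n : nat) : R := / (2 * INR n + 1).

Lemma oddH_sum n t : oddH (S n) t = sum_f_R0 (fun k => / (2 * INR k + 1) ^ t) n.
Proof.
elim: n => [|n IH]; first by rewrite /=; sring.
rewrite [oddH _ _]/= -/(oddH (S n) t) IH /=. by [].
Qed.

Lemma sum_rev (f : nat -> R) n : sum_f_R0 (fun k => f (n - k)%nat) n = sum_f_R0 f n.
Proof.
rewrite !sum_f_R0E big_nat_rev /=; apply: eq_big_nat => i /andP [_ hi].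
by rewrite add0n subSS subKn.
Qed.

Lemma term_id n k : (k <= n)%nat ->
  a2 k * a2 (n - k) = (a2 k + a2 (n - k)) * / (2 * INR n + 2) ^ 2 +
     (a1 k + a1 (n - k)) * (2 / (2 * INR n + 2) ^ 3).
Proof.
move=> hk.
rewrite /a2 /a1 minus_INR; last by lia.
have h1 : INR k <= INR n by apply: le_INR; lia.
have h0 := pos_INR k.
sfield; repeat split; slra.
Qed.

Lemma cauchy n : sum_f_R0 (fun k => a2 k * a2 (n - k)) n = (sigma_term 2 2 n + sigma_term 3 1 n) / 2.
Proof.
have E : sum_f_R0 (fun k => a2 k * a2 (n - k)) n = sum_f_R0 (fun k => (a2 k + a2 (n - k)) * / (2 * INR n + 2) ^ 2 +
     (a1 k + a1 (n - k)) * (2 / (2 * INR n + 2) ^ 3)) n.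
  apply PartSum.sum_eq => i hi; apply: term_id; lia.
rewrite E.
rewrite plus_sum -(scal_sum (fun k => a2 k + a2 (n - k))) -(scal_sum (fun k => a1 k + a1 (n - k))).
rewrite !plus_sum (sum_rev a2) (sum_rev a1).
rewrite /sigma_term !oddH_sum.
have e1 : sum_f_R0 (fun k => / (2 * INR k + 1) ^ 1) n = sum_f_R0 a1 n.
  by apply PartSum.sum_eq => i _; rewrite /a1 pow_1.
have e2 : sum_f_R0 (fun k => / (2 * INR k + 1) ^ 2) n = sum_f_R0 a2 n by [].
rewrite e1 e2.
have h0 := pos_INR n.
rewrite S_INR. sfield. slra.
Qed.

Lemma oddH_ge0 n t : 0 <= oddH n t.
Proof.
elim: n => [|n IH] /=; first by apply: Rle_refl.
have h := pos_INR n.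
have : 0 < / (2 * INR n + 1) ^ t by apply: Rinv_0_lt_compat; apply: pow_lt; slra.
slra.
Qed.

Lemma sigma_ge0 s t n : 0 <= sigma_term s t n.
Proof.
rewrite /sigma_term /Rdiv; apply: Rmult_le_pos; first exact: oddH_ge0.
apply: Rlt_le; apply: Rinv_0_lt_compat; apply: pow_lt; apply: lt_0_INR; lia.
Qed.

Lemma lam4 n : lambda_term 4 n = a4 n.
Proof.
rewrite /lambda_term /a4.
have -> : (4 : R) = INR 4 by simpl; sring.
rewrite Rpower_pow //; have := pos_INR n; slra.
Qed.

Theorem mainTheorem16 :
  ex_series (sigma_term 3 1) /\ ex_series (sigma_term 2 2) /\
  ex_series (lambda_term 4) /\
  sigma_st 3 1 + sigma_st 2 2 = 3 * lambda_odd 4 /\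
  3 * lambda_odd 4 = PI ^ 4 / 32.
Proof.
have Ha2 := is_series_a2.
have a2pos : forall n, 0 <= a2 n.
  move=> n; rewrite /a2; apply: Rlt_le; apply: Rinv_0_lt_compat; apply: pow_lt; have := pos_INR n; slra.
have Habs : ex_series (fun n => Rabs (a2 n)).
  apply: (ex_series_ext a2); first by move=> n; rewrite Rabs_pos_eq.
  by exists (PI ^ 2 / 8).
have HC := is_series_mult _ _ _ _ Ha2 Ha2 Habs Habs.
have Hb : is_series (fun n => sigma_term 2 2 n + sigma_term 3 1 n) (2 * (PI ^ 2 / 8 * (PI ^ 2 / 8))).
  have := is_series_scal_l 2 _ _ HC.
  apply: is_series_ext => n. rewrite cauchy /scal /= /mult /=. sfield.
have Hb' : ex_series (fun n => sigma_term 2 2 n + sigma_term 3 1 n) by eexists; exact Hb.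
have E31 : ex_series (sigma_term 3 1).
  apply: (ex_series_le _ _ _ Hb') => n.
  rewrite /norm /= /abs /= Rabs_pos_eq; last exact: sigma_ge0.
  have := sigma_ge0 2 2 n; slra.
have E22 : ex_series (sigma_term 2 2).
  apply: (ex_series_le _ _ _ Hb') => n.
  rewrite /norm /= /abs /= Rabs_pos_eq; last exact: sigma_ge0.
  have := sigma_ge0 3 1 n; slra.
have H4 : is_series (lambda_term 4) (PI ^ 4 / 96).
  apply: (is_series_ext a4); last exact: is_series_a4.
  by move=> n; rewrite lam4.
have L4 : lambda_odd 4 = PI ^ 4 / 96 by apply: is_series_unique.
split; first exact E31.
split; first exact E22.
split; first by eexists; exact H4.
rewrite L4; split; last by sfield.
rewrite /sigma_st -Series_plus //.
rewrite (Series_ext _ (fun n => sigma_term 2 2 n + sigma_term 3 1 n)); last by move=> n; sring.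
rewrite (is_series_unique _ _ Hb). sfield.
Qed.
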